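(* The map $\phi:\mathcal{H}_{WPP}\longrightarrow(\mathbf{WQSym},\sqcup\!\sqcup,\Delta)$, $P\mapsto \sum_{f\in Lin(P)} f$, is a Hopf algebra isomorphism.
   Context: A weak plane poset is a finite double poset $(P,\leq_1,\leq_2)$ such that (1) for all $x,y\in P$, ($x\leq_1 y$ and $x\leq_2 y$) implies $x=y$; (2) the relation $\preceq$ defined by ($x\leq_1 y$ or $x\leq_2 y$) is a total quasi-order (we write $x\equiv y$ when $x\preceq y$ and $y\preceq x$). The relation $\ll$ defined by ($y\leq_1 x$ or $x\leq_2 y$) is then a total order, so one may assume $(P,\ll)=([n],\leq)$. Weak plane posets are, up to isomorphism, in bijection with packed words $w$ of length $n$ via $P_w=([n],\leq_1,\leq_2)$ with $i\leq_1 j\iff(i\geq j$ and $w(i)\leq w(j))$, $i\leq_2 j\iff(i\leq j$ and $w(i)\leq w(j))$. $\mathcal{H}_{WPP}$ is the vector space spanned by isomorphism classes of weak plane posets, with product $PQ$ (disjoint union, $\leq_1$ and $\leq_2$ restricted to each part, and additionally $i\leq_2 j$ for all $i\in P$, $j\in Q$) and coproduct $\Delta(P)=\sum_{O} P_{\mid P\setminus O}\otimes P_{\mid O}$, summing over subsets $O$ that are upward closed for $\leq_1$; it is a graded connected Hopf algebra. A linear extension of a weak plane poset $P$ with $(P,\ll)=([n],\leq)$ is a surjection $f:[n]\to[k]$ (viewed as the packed word $f(1)\ldots f(n)$) such that $i\leq_1 j\Rightarrow f(i)\leq f(j)$ and $f(i)=f(j)\Rightarrow i\equiv j$; $Lin(P)$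 denotes the set of these. $\mathbf{WQSym}$ is the Hopf algebra of word quasi-symmetric functions with basis the packed words, $\sqcup\!\sqcup$ is its shifted shuffle product and $\Delta$ its usual coproduct; $(\mathbf{WQSym},\sqcup\!\sqcup,\Delta)$ is a Hopf algebra, and $\phi$ is a Hopf algebra morphism. On packed words of length $n$, define $f\leq g$ iff (a) for all $i,j$, ($i\geq j$ and $f(i)\leq f(j)$) implies $g(i)\leq g(j)$, and (b) $g(i)=g(j)$ implies $f(i)=f(j)$; this is an order and $\phi(P_f)=\sum_{f\leq g} g$. *)

(* Defs.v *)
From mathcomp Require Import all_boot all_order all_algebra.
Set Implicit Arguments. Unset Strict Implicit. Unset Printing Implicit Defensive.
Import GRing.Theory.
Local Open Scope ring_scope.

(* Weak plane posets, normalized so that (P, <<) = ([n], <=).          *)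
(* Elements of [n] are represented by 'I_n (i.e. 0..n-1, order kept).  *)

Definition rel2 (n : nat) := {ffun 'I_n -> {ffun 'I_n -> bool}}.
Definition rawpp (n : nat) := (rel2 n * rel2 n)%type.

Section WPPdef.
Variable n : nat.
Implicit Types p : rawpp n.

Definition partial_orderb (r : 'I_n -> 'I_n -> bool) : bool :=
  [&& [forall x, r x x],
      [forall x, forall y, (r x y && r y x) ==> (x == y)] &
      [forall x, forall y, forall z, (r x y && r y z) ==> r x z]].

Definition is_wpp p : bool :=
  let le1 := fun x y => p.1 x y in
  let le2 := fun x y => p.2 x y in
  let pre := fun x y => le1 x y || le2 x y in
  [&& partial_orderb le1, partial_orderb le2,
      [forall x, forall y, (le1 x y && le2 x y) ==> (x == y)],
      [forall x, forall y, pre x y || pre y x],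
      [forall x, forall y, forall z, (pre x y && pre y z) ==> pre x z] &
      (* normalization: the total order << is the natural order of [n] *)
      [forall x, forall y, (le1 y x || le2 x y) == (x <= y)%N]].
End WPPdef.

(* basis of the homogeneous component of degree n of H_WPP *)
Definition wpp (n : nat) := {p : rawpp n | is_wpp p}.

Definition le1 n (P : wpp n) (x y : 'I_n) : bool := (val P).1 x y.
Definition le2 n (P : wpp n) (x y : 'I_n) : bool := (val P).2 x y.
Definition preceq n (P : wpp n) (x y : 'I_n) : bool := le1 P x y || le2 P x y.
Definition equivP n (P : wpp n) (x y : 'I_n) : bool :=
  preceq P x y && preceq P y x.

(* a relation on 'I_k viewed as a relation on nat (false outside [0,k)) *)
Definition relN k (r : 'I_k -> 'I_k -> bool) (a b : nat) : bool :=
  match (insub a : option 'I_k), (insub b : option 'I_k) with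
  | Some x, Some y => r x y
  | _, _ => false
  end.

(* Product PQ: the relations of R : wpp (n+m) are those of the product *)
Definition mulH_coef n m (P : wpp n) (Q : wpp m) (R : wpp (n + m)) : bool :=
  [forall x : 'I_(n + m), forall y : 'I_(n + m),
     (le1 R x y ==
        if (x < n)%N && (y < n)%N then relN (le1 P) x y
        else if (n <= x)%N && (n <= y)%N then relN (le1 Q) (x - n) (y - n)
        else false)
  && (le2 R x y ==
        if (x < n)%N && (y < n)%N then relN (le2 P) x y
        else if (n <= x)%N && (n <= y)%N then relN (le2 Q) (x - n) (y - n)
        else (x < n)%N && (n <= y)%N)].

Definition posl n (S : {set 'I_n}) : seq nat :=
  [seq val x | x <- enum 'I_n & x \in S].

(* the restriction of r to S, relabelled increasingly by [#|S|], equals r' *)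
Definition restr_match n (r : 'I_n -> 'I_n -> bool) (S : {set 'I_n})
    k (r' : 'I_k -> 'I_k -> bool) : bool :=
  (#|S| == k) &&
  [forall a : 'I_k, forall b : 'I_k,
     r' a b == relN r (nth 0%N (posl S) a) (nth 0%N (posl S) b)].

Definition upclosed1 n (P : wpp n) (O : {set 'I_n}) : bool :=
  [forall x, forall y, ((x \in O) && le1 P x y) ==> (y \in O)].

(* coefficient of A (x) B in Delta(P) = sum_O P|_{P\O} (x) P|_O *)
Definition comulH_coef n i j (P : wpp n) (A : wpp i) (B : wpp j) : nat :=
  #|[set O : {set 'I_n} | [&& upclosed1 P O,
        restr_match (le1 P) (~: O) (le1 A), restr_match (le2 P) (~: O) (le2 A),
        restr_match (le1 P) O (le1 B) & restr_match (le2 P) O (le2 B)]]|.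

(* Packed words (values in {1,...,k}, all attained).                   *)

Definition rawpw (n : nat) := {ffun 'I_n -> 'I_n.+1}.
Definition rwseq n (f : rawpw n) : seq nat := [seq (f i : nat) | i <- enum 'I_n].
Definition maxw (s : seq nat) : nat := foldr maxn 0%N s.
Definition packedb n (f : rawpw n) : bool :=
  all (fun x => 0 < x)%N (rwseq f) &&
  all (fun v => v \in rwseq f) (iota 1 (maxw (rwseq f))).

(* basis of the homogeneous component of degree n of WQSym *)
Definition pw (n : nat) := {f : rawpw n | packedb f}.
Definition wseq n (w : pw n) : seq nat := rwseq (val w).
Definition wval n (w : pw n) (i : 'I_n) : nat := val w i.

Definition pack (s : seq nat) : seq nat :=
  [seq size (undup [seq y <- s | (y <= x)%N]) | x <- s].

Definition linext n (P : wpp n) (f : pw n) : bool :=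
  [forall i, forall j, le1 P i j ==> (wval f i <= wval f j)%N] &&
  [forall i, forall j, (wval f i == wval f j) ==> equivP P i j].

(* coefficient of w in the shifted shuffle u ⧢ v (shuffle of the associated
   set compositions, the blocks of v being shifted by n) *)
Definition shuf_coef n m (u : pw n) (v : pw m) (w : pw (n + m)) : bool :=
  let s := wseq w in
  [&& pack (take n s) == wseq u, pack (drop n s) == wseq v &
      all (fun x => x \notin drop n s) (take n s)].

(* coefficient of a (x) b in Delta(w) = sum_{k=0}^{max w} Pack(w|_{<=k}) (x) Pack(w|_{>k}) *)
Definition deconc_coef n i j (w : pw n) (a : pw i) (b : pw j) : nat :=
  let s := wseq w in
  count (fun k => (pack [seq x <- s | (x <= k)%N] == wseq a) &&
                  (pack [seq x <- s | (k < x)%N] == wseq b))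
        (iota 0 (maxw s).+1).

Section Maps.
Variable K : fieldType.

Definition HW n := {ffun wpp n -> K}.
Definition WQ n := {ffun pw n -> K}.

Definition phiK n (x : HW n) : WQ n :=
  [ffun w => \sum_(P : wpp n) x P * (nat_of_bool (linext P w))%:R].

Definition mulH n m (x : HW n) (y : HW m) : HW (n + m) :=
  [ffun R => \sum_(P : wpp n) \sum_(Q : wpp m)
               x P * y Q * (nat_of_bool (mulH_coef P Q R))%:R].

Definition mulW n m (x : WQ n) (y : WQ m) : WQ (n + m) :=
  [ffun w => \sum_(u : pw n) \sum_(v : pw m)
               x u * y v * (nat_of_bool (shuf_coef u v w))%:R].

Definition unitH : HW 0 := [ffun => 1].
Definition unitW : WQ 0 := [ffun => 1].

(* component of Delta in H_i (x) H_j, identified with functions on pairs of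
   basis elements *)
Definition comulH n i j (x : HW n) : {ffun (wpp i * wpp j) -> K} :=
  [ffun AB => \sum_(P : wpp n) x P * (comulH_coef P AB.1 AB.2)%:R].

Definition comulW n i j (x : WQ n) : {ffun (pw i * pw j) -> K} :=
  [ffun ab => \sum_(w : pw n) x w * (deconc_coef w ab.1 ab.2)%:R].

Definition phi2 i j (t : {ffun (wpp i * wpp j) -> K}) : {ffun (pw i * pw j) -> K} :=
  [ffun ab => \sum_(AB : wpp i * wpp j)
     t AB * (nat_of_bool (linext AB.1 ab.1) * nat_of_bool (linext AB.2 ab.2))%:R].

(* counits: coefficient of the empty basis element (degree 0 component) *)
Definition counitH (x : HW 0) : K := \sum_(P : wpp 0) x P.
Definition counitW (x : WQ 0) : K := \sum_(w : pw 0) x w.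
End Maps.

(* Main.v *)
From HB Require Import structures.
From mathcomp Require Import all_boot all_order all_algebra.
Require Import Defs.
Set Implicit Arguments. Unset Strict Implicit. Unset Printing Implicit Defensive.

Definition packF (s : seq nat) (x : nat) := size (undup [seq y <- s | (y <= x)%N]).

Lemma packE s : pack s = map (packF s) s.
Proof. by []. Qed.

Lemma packF_mono s x y : x <= y -> packF s x <= packF s y.
Proof.
move=> le; apply: uniq_leq_size; first exact: undup_uniq.
by move=> z; rewrite !mem_undup !mem_filter => /andP[h ->]; rewrite (leq_trans h le).
Qed.

Lemma packF_strict s x y : y \in s -> x < y -> packF s x < packF s y.
Proof.
move=> ys lt; rewrite ltnNge; apply/negP => le.
have sub : {subset undup [seq z <- s | z <= x] <= undup [seq z <- s | z <= y]}.
  by move=> z; rewrite !mem_undup !mem_filter => /andP[h ->]; rewrite (leq_trans h (ltnW lt)).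
have [_ eqm] := uniq_min_size (undup_uniq _) sub le.
have := eqm y; rewrite !mem_undup !mem_filter leqnn ys /= => /esym.
by rewrite leqNgt lt.
Qed.

Lemma packF_le s x y : x \in s -> y \in s -> (packF s x <= packF s y) = (x <= y).
Proof.
move=> xs ys; case: (leqP x y) => h; first exact: packF_mono.
by apply/negbTE; rewrite -ltnNge; apply: packF_strict.
Qed.

Lemma packF_gt0 s x : x \in s -> 0 < packF s x.
Proof.
move=> xs; rewrite lt0n size_eq0; apply/eqP => /(congr1 (fun l => x \in l)).
by rewrite mem_undup mem_filter leqnn xs.
Qed.

Lemma packF_leu s x : packF s x <= size (undup s).
Proof.
apply: uniq_leq_size; first exact: undup_uniq.
by move=> z; rewrite !mem_undup mem_filter => /andP[].
Qed.

Lemma size_pack s : size (pack s) = size s.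
Proof. by rewrite packE size_map. Qed.

Lemma nth_pack s i : i < size s -> nth 0 (pack s) i = packF s (nth 0 s i).
Proof. by move=> h; rewrite packE (nth_map 0). Qed.

Lemma pack_le s i j : i < size s -> j < size s ->
  (nth 0 (pack s) i <= nth 0 (pack s) j) = (nth 0 s i <= nth 0 s j).
Proof. by move=> hi hj; rewrite !nth_pack // packF_le // mem_nth. Qed.

Lemma maxw_ge s x : x \in s -> x <= maxw s.
Proof.
elim: s => //= a s IH; rewrite inE => /orP[/eqP->|/IH h].
  exact: leq_maxl.
by rewrite (leq_trans h) // leq_maxr.
Qed.

Lemma maxw_mem s : s != [::] -> maxw s \in s.
Proof.
elim: s => //= a s IH _; case: s IH => [|b s] IH /=.
  by rewrite maxn0 inE.
rewrite inE; move: (IH isT); rewrite /maxw /= => IH'.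
rewrite {1 3}/maxn; case: ltnP => h; first by rewrite IH' orbT.
by rewrite eqxx.
Qed.

Lemma maxw_le s m : all (fun x => x <= m) s -> maxw s <= m.
Proof. by elim: s => //= a s IH /andP[h1 h2]; rewrite geq_max h1 IH. Qed.

Definition packed (s : seq nat) :=
  all (fun x => 0 < x) s && all (fun v => v \in s) (iota 1 (maxw s)).

Lemma packed_pack s : packed (pack s).
Proof.
apply/andP; split.
  by apply/allP => x; rewrite packE => /mapP[y ys ->]; apply: packF_gt0.
set V := undup s.
have uV : uniq (map (packF s) V).
  rewrite map_inj_in_uniq ?undup_uniq // => x y; rewrite !mem_undup => xs ys e.
  by apply/eqP; rewrite eqn_leq -(packF_le xs ys) -(packF_le ys xs) e leqnn.
have sub : {subset map (packF s) V <= iota 1 (size V)}.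
  move=> z /mapP[x]; rewrite mem_undup => xs ->.
  by rewrite mem_iota packF_gt0 //= add1n ltnS packF_leu.
have hsz : size (iota 1 (size V)) <= size (map (packF s) V) by rewrite size_map size_iota.
have [_ eqm] := uniq_min_size uV sub hsz.
apply/allP => v; rewrite mem_iota => /andP[v1 vm].
have : v \in iota 1 (size V).
  rewrite mem_iota v1 /= (leq_trans vm) // add1n ltnS maxw_le //.
  by apply/allP => z; rewrite packE => /mapP[y _ ->]; apply: packF_leu.
rewrite -eqm => /mapP[x]; rewrite mem_undup => xs ->.
by rewrite packE map_f.
Qed.

Lemma pack_id s : packed s -> pack s = s.
Proof.
case/andP => /allP pos /allP all1.
rewrite packE; apply: map_id_in => x xs /=.
have x1 : 0 < x by apply: pos.
rewrite /packF; transitivity (size (iota 1 x)); last exact: size_iota.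
apply: perm_size; apply: uniq_perm.
- exact: undup_uniq.
- exact: iota_uniq.
move=> z; rewrite mem_undup mem_filter mem_iota add1n ltnS.
apply/andP/andP => [[zx zs]|[z1 zx]]; first by split; [apply: pos|].
split => //; apply: all1; rewrite mem_iota z1 add1n ltnS.
by rewrite (leq_trans zx) // maxw_ge.
Qed.

Lemma pack_ord s t : size s = size t ->
  (forall i j, i < size s -> j < size s -> (nth 0 s i <= nth 0 s j) = (nth 0 t i <= nth 0 t j)) ->
  pack s = pack t.
Proof.
move=> sz ord.
have eqo i j : i < size s -> j < size s -> (nth 0 s i == nth 0 s j) = (nth 0 t i == nth 0 t j).
  by move=> hi hj; rewrite !eqn_leq !ord.
pose h x := nth 0 t (index x s).
have hnth i : i < size s -> h (nth 0 s i) = nth 0 t i.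
  move=> hi; rewrite /h; apply/eqP; rewrite -eqo ?nth_index ?mem_nth //.
  by rewrite index_mem mem_nth.
have ts : t = map h s.
  apply: (@eq_from_nth _ 0); first by rewrite size_map sz.
  by move=> i; rewrite -sz => hi; rewrite (nth_map 0) // hnth.
have hinj : {in s &, injective h}.
  move=> x y /(nthP 0)[i hi <-] /(nthP 0)[j hj <-]; rewrite !hnth // => e.
  by apply/eqP; rewrite eqo // e.
have hle : {in s &, forall x y, (h x <= h y) = (x <= y)}.
  by move=> x y /(nthP 0)[i hi <-] /(nthP 0)[j hj <-]; rewrite !hnth // ord.
rewrite ts !packE -map_comp; apply/eq_in_map => x xs /=.
rewrite /packF filter_map.
have -> : [seq y <- s | preim h (fun y => y <= h x) y] = [seq y <- s | y <= x].
  by apply: eq_in_filter => y ys; rewrite /= hle.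
symmetry.
set l := [seq y <- s | y <= x].
have ls : {subset l <= s} by move=> y; rewrite mem_filter => /andP[].
have -> : size (undup (map h l)) = size (map h (undup l)).
  apply: perm_size; apply: uniq_perm; first exact: undup_uniq.
    rewrite map_inj_in_uniq ?undup_uniq // => a b; rewrite !mem_undup => al bl.
    by apply: hinj; apply: ls.
  by move=> z; rewrite mem_undup; apply/mapP/mapP => [[y yl ->]|[y]];
    [exists y; rewrite ?mem_undup | rewrite mem_undup => yl ->; exists y].
by rewrite size_map.
Qed.

Section PW.
Variable n : nat.

Lemma size_wseq (w : pw n) : size (wseq w) = n.
Proof. by rewrite /wseq /rwseq size_map size_enum_ord. Qed.

Lemma nth_wseq (w : pw n) (i : 'I_n) : nth 0 (wseq w) i = wval w i.
Proof. by rewrite /wseq /rwseq (nth_map i) ?size_enum_ord // nth_ord_enum. Qed.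

Lemma packed_wseq (w : pw n) : packed (wseq w).
Proof. exact: (valP w). Qed.

Lemma pack_wseq (w : pw n) : pack (wseq w) = wseq w.
Proof. exact/pack_id/packed_wseq. Qed.

Lemma wseq_inj : injective (@wseq n).
Proof.
move=> u v e; apply: val_inj; apply/ffunP => i; apply: val_inj.
by have := nth_wseq u i; rewrite e nth_wseq.
Qed.

Lemma exists_pw (s : seq nat) : size s = n -> {u : pw n | wseq u = pack s}.
Proof.
move=> sz.
pose f : rawpw n := [ffun i : 'I_n => inord (nth 0 (pack s) i) : 'I_n.+1].
have ef : rwseq f = pack s.
  apply: (@eq_from_nth _ 0); first by rewrite /rwseq size_map size_enum_ord size_pack.
  move=> i; rewrite /rwseq size_map size_enum_ord => hi.
  rewrite (nth_map (Ordinal hi)) ?size_enum_ord // ffunE.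
  have -> : nth (Ordinal hi) (enum 'I_n) i = Ordinal hi.
    by apply: val_inj; rewrite /= nth_enum_ord.
  rewrite inordK //= ltnS nth_pack ?sz //.
  by rewrite (leq_trans (packF_leu _ _)) // -sz size_undup.
have pf : packedb f by rewrite /packedb ef; exact: packed_pack.
by exists (exist _ f pf); rewrite /wseq /= ef.
Qed.

Lemma pw_ord_inj (u v : pw n) :
  (forall i j : 'I_n, (wval u i <= wval u j) = (wval v i <= wval v j)) -> u = v.
Proof.
move=> h; apply: wseq_inj; rewrite -pack_wseq -(pack_wseq v).
apply: pack_ord; first by rewrite !size_wseq.
move=> i j; rewrite size_wseq => hi hj.
by have := h (Ordinal hi) (Ordinal hj); rewrite -!nth_wseq.
Qed.

End PW.

Definition tpre n (T : 'I_n -> 'I_n -> bool) :=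
  [/\ forall x, T x x, forall x y z, T x y -> T y z -> T x z & forall x y, T x y || T y x].

Section WPP.
Variable n : nat.
Variable P : wpp n.

Let H := valP P.

Lemma wpp_props :
  [/\ partial_orderb (le1 P), partial_orderb (le2 P),
      forall x y, le1 P x y -> le2 P x y -> x = y,
      forall x y, preceq P x y || preceq P y x &
      (forall x y z, preceq P x y -> preceq P y z -> preceq P x z) /\
      forall x y, (le1 P y x || le2 P x y) = (x <= y)].
Proof.
case/and5P: H => p1 p2 /forallP h1 /forallP h2 /andP[/forallP h3 /forallP h4]; split => //.
- by move=> x y a b; apply/eqP; move/forallP: (h1 x) => /(_ y) /implyP; apply; apply/andP.
- by move=> x y; move/forallP: (h2 x) => /(_ y).
split.
- move=> x y z a b; move/forallP: (h3 x) => /(_ y) /forallP /(_ z).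
  by move: a b; rewrite /preceq /le1 => -> -> /implyP; apply.
- by move=> x y; move/forallP: (h4 x) => /(_ y) /eqP.
Qed.

Lemma po_refl (r : 'I_n -> 'I_n -> bool) : partial_orderb r -> forall x, r x x.
Proof. by case/and3P => /forallP. Qed.

Lemma preceq_refl x : preceq P x x.
Proof. by case: wpp_props => p1 _ _ _ _; rewrite /preceq (po_refl p1). Qed.

Lemma preceq_trans x y z : preceq P x y -> preceq P y z -> preceq P x z.
Proof. by case: wpp_props => _ _ _ _ [t _]; apply: t. Qed.

Lemma preceq_total x y : preceq P x y || preceq P y x.
Proof. by case: wpp_props => _ _ _ t _; apply: t. Qed.

Lemma preceq_tpre : tpre (preceq P).
Proof. by split; [apply: preceq_refl|apply: preceq_trans|apply: preceq_total]. Qed.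

Lemma le1E x y : le1 P x y = (y <= x) && preceq P x y.
Proof.
case: wpp_props => p1 p2 a _ [_ nrm].
have n1 := nrm y x; have n2 := nrm x y; rewrite /preceq.
case h1: (le1 P x y); case h2: (le2 P x y); rewrite ?andbT ?andbF //.
- by rewrite (a _ _ h1 h2) leqnn.
- by move: n1; rewrite h1.
- move: n2; rewrite h2 orbT => /esym xy; apply/esym/negbTE; rewrite -ltnNge ltn_neqAle xy andbT.
  by apply/negP => /eqP exy; move: h1; rewrite (val_inj exy) (po_refl p1).
Qed.

Lemma le2E x y : le2 P x y = (x <= y) && preceq P x y.
Proof.
case: wpp_props => p1 p2 a _ [_ nrm].
have n1 := nrm y x; have n2 := nrm x y; rewrite /preceq.
case h1: (le1 P x y); case h2: (le2 P x y); rewrite ?andbT ?andbF //.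
- by rewrite (a _ _ h1 h2) leqnn.
- move: n1; rewrite h1 => /esym yx; apply/esym/negbTE; rewrite -ltnNge ltn_neqAle yx andbT.
  by apply/negP => /eqP exy; move: h2; rewrite (val_inj exy) (po_refl p2).
- by move: n2; rewrite h2 orbT.
Qed.
End WPP.

Section MK.
Variable n : nat.

Lemma wpp_eq (P Q : wpp n) : (forall x y, preceq P x y = preceq Q x y) -> P = Q.
Proof.
move=> e; apply: val_inj.
rewrite [val P]surjective_pairing [val Q]surjective_pairing; congr pair;
  apply/ffunP => x; apply/ffunP => y.
- by have := le1E P x y; rewrite e -le1E.
- by have := le2E P x y; rewrite e -le2E.
Qed.

Definition mkraw (T : 'I_n -> 'I_n -> bool) : rawpp n :=
  ([ffun x : 'I_n => [ffun y : 'I_n => (y <= x) && T x y]], [ffun x : 'I_n => [ffun y : 'I_n => (x <= y) && T x y]]).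

Lemma mkraw_wpp T : tpre T -> is_wpp (mkraw T).
Proof.
case=> Tr Tt Ttot.
have po (r c : 'I_n -> 'I_n -> bool) : (forall x y, r x y = c x y && T x y) ->
   (forall x, c x x) -> (forall x y, c x y -> c y x -> x = y)
   -> (forall x y z, c x y -> c y z -> c x z) -> partial_orderb r.
  move=> rE cr ca ct; apply/and3P; split; rewrite ?rE.
  - by apply/forallP => x; rewrite rE cr Tr.
  - apply/forallP => x; apply/forallP => y; rewrite !rE; apply/implyP => /andP[/andP[a _] /andP[b _]].
    by rewrite (ca _ _ a b).
  - apply/forallP => x; apply/forallP => y; apply/forallP => z; rewrite !rE; apply/implyP.
    by case/andP => /andP[a b] /andP[c' d]; rewrite (ct _ _ _ a c') (Tt _ _ _ b d).
have pre (x y : 'I_n) : ((mkraw T).1 x y || (mkraw T).2 x y) = T x y.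
  rewrite !ffunE -andb_orl; case: (leqP y x) => //= h; by rewrite (ltnW h).
apply/and5P; split.
- apply: (po _ (fun x y : 'I_n => y <= x)) => //; first by move=> x y; rewrite !ffunE.
  - by move=> x y a b; apply: val_inj; apply/eqP; rewrite eqn_leq a b.
  - by move=> x y z a b; apply: leq_trans b a.
- apply: (po _ (fun x y : 'I_n => x <= y)) => //; first by move=> x y; rewrite !ffunE.
  - by move=> x y a b; apply: val_inj; apply/eqP; rewrite eqn_leq a b.
  - by move=> x y z a b; apply: leq_trans a b.
- apply/forallP => x; apply/forallP => y; apply/implyP; rewrite !ffunE.
  by case/andP => /andP[a _] /andP[b _]; apply/eqP; apply: val_inj; apply/eqP; rewrite eqn_leq a b.
- apply/forallP => x; apply/forallP => y; by rewrite !pre Ttot.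
apply/andP; split.
- apply/forallP => x; apply/forallP => y; apply/forallP => z; rewrite !pre; apply/implyP.
  by case/andP; apply: Tt.
- apply/forallP => x; apply/forallP => y; rewrite !ffunE -andb_orr.
  by case: (x <= y); rewrite //= orbC Ttot.
Qed.

Definition mkwpp T (h : tpre T) : wpp n := exist _ (mkraw T) (mkraw_wpp h).

Lemma preceq_mk T (h : tpre T) x y : preceq (mkwpp h) x y = T x y.
Proof.
rewrite /preceq /le1 /le2 /= !ffunE -andb_orl.
by case: (leqP y x) => //= hh; rewrite (ltnW hh).
Qed.

End MK.

Lemma linextP n (P : wpp n) (g : pw n) :
  reflect ((forall i j, le1 P i j -> wval g i <= wval g j) /\
           (forall i j, wval g i = wval g j -> equivP P i j)) (linext P g).
Proof.
apply: (iffP andP) => [[/forallP h1 /forallP h2]|[h1 h2]]; split.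
- by move=> i j; move/forallP: (h1 i) => /(_ j) /implyP.
- by move=> i j e; move/forallP: (h2 i) => /(_ j) /implyP; apply; apply/eqP.
- by apply/forallP => i; apply/forallP => j; apply/implyP; apply: h1.
- by apply/forallP => i; apply/forallP => j; apply/implyP => /eqP; apply: h2.
Qed.

Section C.
Variable n : nat.

Lemma card_tpre (T : 'I_n -> 'I_n -> bool) (h : tpre T) i j :
  (#|[set k | T k i]| <= #|[set k | T k j]|) = T i j.
Proof.
case: h => Tr Tt Ttot; case hij: (T i j).
  by apply: subset_leq_card; apply/subsetP => k; rewrite !inE => a; apply: Tt a hij.
apply/negbTE; rewrite -ltnNge; apply: proper_card; apply/properP; split.
  apply/subsetP => k; rewrite !inE => a; apply: Tt a _.
  by move: (Ttot i j); rewrite hij.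
by exists i; rewrite !inE ?Tr ?hij.
Qed.

Definition ordseq (T : 'I_n -> 'I_n -> bool) := [seq #|[set k | T k i]| | i <- enum 'I_n].

Lemma size_ordseq T : size (ordseq T) = n.
Proof. by rewrite size_map size_enum_ord. Qed.

Lemma nth_ordseq T (i : 'I_n) : nth 0 (ordseq T) i = #|[set k | T k i]|.
Proof. by rewrite (nth_map i) ?size_enum_ord // nth_ord_enum. Qed.

Definition ordw T : pw n := sval (exists_pw (size_ordseq T)).

Lemma ordw_le T (h : tpre T) i j : (wval (ordw T) i <= wval (ordw T) j) = T i j.
Proof.
rewrite -!nth_wseq /ordw; case: exists_pw => u /= ->.
by rewrite pack_le ?size_ordseq // !nth_ordseq card_tpre.
Qed.

Definition wP (P : wpp n) := ordw (preceq P).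

Lemma wP_le P i j : (wval (wP P) i <= wval (wP P) j) = preceq P i j.
Proof. exact/ordw_le/preceq_tpre. Qed.

Lemma gtpre (g : pw n) : tpre (fun i j => wval g i <= wval g j).
Proof.
split => //; first by move=> x y z; apply: leq_trans.
by move=> x y; apply: leq_total.
Qed.

Definition gP g := mkwpp (gtpre g).

Lemma wPK : cancel wP gP.
Proof. by move=> P; apply: wpp_eq => i j; rewrite preceq_mk wP_le. Qed.

Lemma gPK : cancel gP wP.
Proof. by move=> g; apply: pw_ord_inj => i j; rewrite wP_le preceq_mk. Qed.

Lemma card_wpp_pw : #|{: wpp n}| = #|{: pw n}|.
Proof. by apply: (@bij_eq_card _ _ wP); exists gP; [apply: wPK|apply: gPK]. Qed.

Lemma wP_inj : injective wP.
Proof. exact: can_inj wPK. Qed.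

Lemma linext_wP P : linext P (wP P).
Proof.
apply/linextP; split => i j.
  by rewrite le1E wP_le => /andP[].
by move=> e; rewrite /equivP -!wP_le e leqnn.
Qed.

Definition cmpn (x y : nat) := (y < x) + (x != y).

Lemma cmpn_le1 x y : (x <= y) = (cmpn x y != 2).
Proof. by rewrite /cmpn; case: ltngtP. Qed.

Lemma cmpn_le2 x y : (y <= x) = (cmpn x y != 1).
Proof. by rewrite /cmpn; case: ltngtP. Qed.

Definition cc (g : pw n) (p : 'I_n * 'I_n) :=
  if (p.1 < p.2)%N then cmpn (wval g p.1) (wval g p.2) else 0.

Definition rk g := \sum_p cc g p.

Lemma cc_le P g p : linext P g -> cc (wP P) p <= cc g p.
Proof.
case/linextP => h1 h2; rewrite /cc; case: p => i j /=; case: ifP => // ij.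
have ni : (i <= j)%N by apply: ltnW.
have le := wP_le P i j; have ge := wP_le P j i.
have hji : preceq P j i -> wval g j <= wval g i.
  by move=> pji; apply: h1; rewrite le1E ni.
have hne : ~~ preceq P i j || ~~ preceq P j i -> wval g i != wval g j.
  by move=> hh; apply/negP => /eqP /h2 /andP[a b]; move: hh; rewrite a b.
rewrite /cmpn; case: (ltngtP (wval (wP P) i) (wval (wP P) j)) => a.
- have -> : wval g i != wval g j.
    by apply: hne; rewrite -ge leqNgt a orbT.
  by case: (_ < _).
- have ne : wval g i != wval g j by apply: hne; rewrite -le leqNgt a.
  have gl : wval g j < wval g i.
    by rewrite ltn_neqAle eq_sym ne hji // -ge ltnW.
  by rewrite gl ne.
- by [].
Qed.

Lemma cc_eq_inj (u v : pw n) : (forall p, cc u p = cc v p) -> u = v.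
Proof.
move=> e; apply: pw_ord_inj => i j.
case: (ltngtP i j) => ij.
- by have := e (i, j); rewrite /cc /= ij !cmpn_le1 => ->.
- by have := e (j, i); rewrite /cc /= ij !cmpn_le2 => ->.
- by rewrite (val_inj ij) !leqnn.
Qed.

Lemma sum_lt (I : finType) (F G : I -> nat) k :
  (forall i, F i <= G i) -> F k < G k -> \sum_i F i < \sum_i G i.
Proof.
move=> le lt; rewrite (bigD1 k) //= [X in _ < X](bigD1 k) //=.
by rewrite -addSn leq_add // leq_sum.
Qed.

Lemma tri P g : linext P g -> g != wP P -> rk (wP P) < rk g.
Proof.
move=> lin ne.
have [p hp] : exists p, cc (wP P) p != cc g p.
  apply/existsP; apply: contraR ne; rewrite negb_exists => /forallP h.
  by apply/eqP; apply: cc_eq_inj => p; have := h p; rewrite negbK => /eqP.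
apply: (sum_lt (k := p)) => [q|]; first exact: cc_le.
by rewrite ltn_neqAle hp cc_le.
Qed.
End C.

Import GRing.Theory.

Section Lin.
Local Open Scope ring_scope.
Variable K : fieldType.
Variables I J : finType.

Lemma lin_inj_bij (f : {ffun I -> K} -> {ffun J -> K}) :
  (forall a (u v : {ffun I -> K}), f [ffun i => a * u i + v i] = [ffun j => a * f u j + f v j]) ->
  (forall u, f u = 0 -> u = 0) -> #|I| = #|J| -> bijective f.
Proof.
move=> lf kf card.
pose g : {ffun I -> K^o} -> {ffun J -> K^o} := f.
have lg : linear g.
  move=> a u v; rewrite /g.
  have -> : a *: u + v = [ffun i => a * u i + v i] by apply/ffunP => i; rewrite !ffunE.
  by rewrite lf; apply/ffunP => j; rewrite !ffunE.
pose gL := GRing.isLinear.Build K {ffun I -> K^o} {ffun J -> K^o} *:%R g lg.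
pose G : {linear {ffun I -> K^o} -> {ffun J -> K^o}} := HB.pack g gL.
pose h := linfun G.
have hE u : h u = f u by rewrite lfunE.
have k0 : lker h == 0%VS.
  apply/lker0P => u v e; apply/eqP; rewrite -subr_eq0; apply/eqP; apply: kf.
  have := lf (-1) v u; rewrite -!hE e.
  have -> : [ffun i => -1 * v i + u i] = u - v by apply/ffunP => i; rewrite !ffunE mulN1r addrC.
  by move=> ->; apply/ffunP => j; rewrite !ffunE mulN1r addNr.
have im : limg h = fullv.
  apply/eqP; rewrite eqEdim subvf /=.
  have := limg_ker_dim h fullv; rewrite (eqP k0) capv0 dimv0 add0n => ->.
  by rewrite !dimvf /dim /= card.
exists (fun w => (h^-1)%VF w) => u.
  by rewrite -hE (lker0_lfunK k0).
by rewrite -hE limg_lfunVK // im memvf.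
Qed.
End Lin.

Import GRing.Theory.

Section D.
Variable K : fieldType.
Variable n : nat.
Local Open Scope ring_scope.

Lemma phiK_inj0 (x : HW K n) : (forall w, phiK x w = 0) -> x = 0.
Proof.
move=> h; apply/ffunP => P; rewrite ffunE; apply/eqP; apply/negPn/negP => nz.
case: (@arg_minnP _ P (fun Q => x Q != 0) (fun Q => rk (wP Q))) => // Q0 nzQ0 minQ0.
have := h (wP Q0); rewrite ffunE (bigD1 Q0) //= big1 ?addr0.
  by rewrite linext_wP mulr1 => /eqP; rewrite (negbTE nzQ0).
move=> Q nQ; case: (eqVneq (x Q) 0) => [->|nzQ]; first by rewrite mul0r.
case lin: (linext Q (wP Q0)); last by rewrite mulr0.
have ne : wP Q0 != wP Q by apply: contra nQ => /eqP /wP_inj ->.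
have := tri lin ne; have := minQ0 Q nzQ.
by move=> a b; have := leq_ltn_trans a b; rewrite ltnn.
Qed.

Lemma phiK_bij : bijective (@phiK K n).
Proof.
apply: lin_inj_bij.
- move=> a u v; apply/ffunP => w; rewrite !ffunE mulr_sumr -big_split /=.
  by apply: eq_bigr => P _; rewrite ffunE mulrDl mulrA.
- by move=> u hu; apply: phiK_inj0 => w; rewrite hu ffunE.
- exact: card_wpp_pw.
Qed.
End D.

Lemma relN_ord k (r : 'I_k -> 'I_k -> bool) (i j : 'I_k) : relN r i j = r i j.
Proof. by rewrite /relN !valK. Qed.

Lemma equivP_mk n T (h : tpre T) (x y : 'I_n) : equivP (mkwpp h) x y = T x y && T y x.
Proof. by rewrite /equivP !preceq_mk. Qed.

Lemma le1_mk n T (h : tpre T) (x y : 'I_n) : le1 (mkwpp h) x y = (y <= x) && T x y.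
Proof. by rewrite le1E preceq_mk. Qed.

Lemma le2_mk n T (h : tpre T) (x y : 'I_n) : le2 (mkwpp h) x y = (x <= y) && T x y.
Proof. by rewrite le2E preceq_mk. Qed.

Section Split.
Variables n m : nat.
Lemma ordsplit (i : 'I_(n + m)) :
  (exists a : 'I_n, i = lshift m a) \/ (exists b : 'I_m, i = rshift n b).
Proof.
case: (splitP i) => [a e|b e]; [left; exists a | right; exists b]; exact: val_inj.
Qed.
End Split.

Ltac osplit x := let a := fresh "a" in case: (ordsplit x) => [[a ->]|[a ->]].

Lemma ltn_addr_false n b : (n + b < n) = false.
Proof. by rewrite ltnNge leq_addr. Qed.
Lemma ord_geq_false n (a : 'I_n) : (n <= a) = false.
Proof. by rewrite leqNgt ltn_ord. Qed.
Lemma ord_addr_false n (a : 'I_n) b : (n + b <= a) = false.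
Proof. by apply/negbTE; rewrite -ltnNge (leq_trans (ltn_ord a)) // leq_addr. Qed.
Lemma ord_addr_true n (a : 'I_n) b : (a <= n + b) = true.
Proof. by rewrite (leq_trans (ltnW (ltn_ord a))) // leq_addr. Qed.

Section Prod.
Variables n m : nat.
Variables (P : wpp n) (Q : wpp m).

Definition Tm (x y : 'I_(n + m)) : bool :=
  if (x < n) && (y < n) then relN (preceq P) x y
  else if (n <= x) && (n <= y) then relN (preceq Q) (x - n) (y - n)
  else (x < n).

Lemma Tm_ll a b : Tm (lshift m a) (lshift m b) = preceq P a b.
Proof. by rewrite /Tm /= !ltn_ord /= relN_ord. Qed.
Lemma Tm_rr a b : Tm (rshift n a) (rshift n b) = preceq Q a b.
Proof. by rewrite /Tm /= !ltnNge !leq_addr /= !addKn relN_ord. Qed.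
Lemma Tm_lr a b : Tm (lshift m a) (rshift n b) = true.
Proof. by rewrite /Tm /= ltn_ord ltnNge leq_addr /= leqNgt ltn_ord. Qed.
Lemma Tm_rl a b : Tm (rshift n a) (lshift m b) = false.
Proof. by rewrite /Tm /= ltnNge leq_addr /= leqNgt ltn_ord. Qed.

Lemma Tm_tpre : tpre Tm.
Proof.
split.
- by move=> x; osplit x; rewrite ?Tm_ll ?Tm_rr preceq_refl.
- move=> x y z; osplit x; osplit y; osplit z;
    rewrite ?Tm_ll ?Tm_rr ?Tm_lr ?Tm_rl // => h1 h2;
    first [exact: (preceq_trans h1 h2) | by []].
- by move=> x y; osplit x; osplit y; rewrite ?Tm_ll ?Tm_rr ?Tm_lr ?Tm_rl ?preceq_total.
Qed.

Definition PQ := mkwpp Tm_tpre.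

Lemma mulH_PQ : mulH_coef P Q PQ.
Proof.
apply/forallP => x; apply/forallP => y; rewrite le1_mk le2_mk.
osplit x; osplit y; rewrite ?Tm_ll ?Tm_rr ?Tm_lr ?Tm_rl /= ?ltn_ord ?leq_add2l
  ?ltn_addr_false ?ord_geq_false ?ord_addr_false ?ord_addr_true ?leq_addr ?addKn
  ?relN_ord ?le1E ?le2E ?andbT ?andbF ?eqxx //.
Qed.

Lemma mulH_uniq R R' : mulH_coef P Q R -> mulH_coef P Q R' -> R = R'.
Proof.
move=> /forallP h /forallP h'; apply: wpp_eq => x y; rewrite /preceq.
move/forallP: (h x) => /(_ y) /andP[/eqP -> /eqP ->].
by move/forallP: (h' x) => /(_ y) /andP[/eqP -> /eqP ->].
Qed.

Variable w : pw (n + m).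
Let wl (a : 'I_n) := wval w (lshift m a).
Let wr (b : 'I_m) := wval w (rshift n b).

Lemma size_take_w : size (take n (wseq w)) = n.
Proof. by rewrite size_takel // size_wseq leq_addr. Qed.
Lemma size_drop_w : size (drop n (wseq w)) = m.
Proof. by rewrite size_drop size_wseq addKn. Qed.

Lemma nth_take_w (a : 'I_n) : nth 0 (take n (wseq w)) a = wl a.
Proof. by rewrite nth_take // (nth_wseq w (lshift m a)). Qed.
Lemma nth_drop_w (b : 'I_m) : nth 0 (drop n (wseq w)) b = wr b.
Proof. by rewrite nth_drop (nth_wseq w (rshift n b)). Qed.

Lemma all_disj : all (fun x => x \notin drop n (wseq w)) (take n (wseq w)) =
  [forall a, forall b, wl a != wr b].
Proof.
apply/allP/forallP => [h a|h x /(nthP 0)[i hi <-]].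
  apply/forallP => b; apply/eqP => e.
  have := h (wl a); rewrite -nth_take_w mem_nth ?size_take_w // => /(_ isT).
  by rewrite nth_take_w e -nth_drop_w mem_nth // size_drop_w.
apply/negP => /(nthP 0)[j hj e].
rewrite size_take_w in hi; rewrite size_drop_w in hj.
move/forallP: (h (Ordinal hi)) => /(_ (Ordinal hj)).
by rewrite -(nth_take_w (Ordinal hi)) -(nth_drop_w (Ordinal hj)) /= e eqxx.
Qed.

Lemma lin_PQ (u : pw n) (v : pw m) :
  wseq u = pack (take n (wseq w)) -> wseq v = pack (drop n (wseq w)) ->
  linext PQ w = [&& linext P u, linext Q v &
                    all (fun x => x \notin drop n (wseq w)) (take n (wseq w))].
Proof.
move=> eu ev.
have ul a b : (wval u a <= wval u b) = (wl a <= wl b).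
  by rewrite -!nth_wseq eu pack_le ?size_take_w // !nth_take_w.
have ue a b : (wval u a == wval u b) = (wl a == wl b) by rewrite !eqn_leq !ul.
have vl a b : (wval v a <= wval v b) = (wr a <= wr b).
  by rewrite -!nth_wseq ev pack_le ?size_drop_w // !nth_drop_w.
have ve a b : (wval v a == wval v b) = (wr a == wr b) by rewrite !eqn_leq !vl.
rewrite all_disj; apply/idP/idP.
- case/linextP => h1 h2; apply/and3P; split.
  + apply/linextP; split => a b.
    * by rewrite le1E ul => hh; apply: h1; rewrite le1_mk Tm_ll.
    * by move=> /eqP; rewrite ue => /eqP /h2; rewrite equivP_mk !Tm_ll.
  + apply/linextP; split => a b.
    * by rewrite le1E vl => hh; apply: h1; rewrite le1_mk Tm_rr /= leq_add2l.
    * by move=> /eqP; rewrite ve => /eqP /h2; rewrite equivP_mk !Tm_rr.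
  + apply/forallP => a; apply/forallP => b; apply/negP => /eqP /h2.
    by rewrite equivP_mk Tm_lr Tm_rl.
- case/and3P => /linextP[p1 p2] /linextP[q1 q2] /forallP d.
  apply/linextP; split => x y; osplit x; osplit y;
    rewrite ?le1_mk ?equivP_mk ?Tm_ll ?Tm_rr ?Tm_lr ?Tm_rl /= ?leq_add2l
      ?ord_addr_false ?andbF ?andbT //.
  + by rewrite -le1E => /p1; rewrite ul.
  + by rewrite -le1E => /q1; rewrite vl.
  + by move=> e; apply: p2; apply/eqP; rewrite ue; apply/eqP.
  + by move=> e; move/forallP: (d a) => /(_ a0); rewrite /wl /wr e eqxx.
  + by move=> e; move/forallP: (d a0) => /(_ a); rewrite /wl /wr e eqxx.
  + by move=> e; apply: q2; apply/eqP; rewrite ve; apply/eqP.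
Qed.
End Prod.

Import GRing.Theory.

Section Mul.
Variable K : fieldType.
Variables n m : nat.
Local Open Scope ring_scope.

Lemma natb_and (a b : bool) : (nat_of_bool (a && b))%:R = (nat_of_bool a)%:R * (nat_of_bool b)%:R :> K.
Proof. by case: a; case: b; rewrite /= ?mulr1 ?mulr0 ?mul0r. Qed.

Lemma shuf_sum (w : pw (n + m)) (u0 : pw n) (v0 : pw m) (G : pw n -> pw m -> K) :
  wseq u0 = pack (take n (wseq w)) -> wseq v0 = pack (drop n (wseq w)) ->
  \sum_(u : pw n) \sum_(v : pw m) G u v * (nat_of_bool (shuf_coef u v w))%:R =
  G u0 v0 * (nat_of_bool (all (fun x => x \notin drop n (wseq w)) (take n (wseq w))))%:R.
Proof.
move=> eu ev; rewrite (bigD1 u0) //= [X in _ + X]big1 ?addr0.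
  rewrite (bigD1 v0) //= [X in _ + X]big1 ?addr0; first by rewrite /shuf_coef eu ev !eqxx.
  move=> v nv; rewrite /shuf_coef -ev (inj_eq (@wseq_inj m)) (eq_sym v0) (negbTE nv).
  by rewrite andbF mulr0.
move=> u nu; apply: big1 => v _; rewrite /shuf_coef -eu (inj_eq (@wseq_inj n)) (eq_sym u0).
by rewrite (negbTE nu) mulr0.
Qed.

Lemma mulH_expand (x : HW K n) (y : HW K m) (c : wpp (n + m) -> K) :
  \sum_R mulH x y R * c R = \sum_P \sum_Q x P * y Q * c (PQ P Q).
Proof.
rewrite /mulH.
transitivity (\sum_R \sum_P \sum_Q x P * y Q * (nat_of_bool (mulH_coef P Q R))%:R * c R).
  apply: eq_bigr => R _; rewrite ffunE big_distrl /=; apply: eq_bigr => P _.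
  by rewrite big_distrl.
rewrite exchange_big /=; apply: eq_bigr => P _.
rewrite exchange_big /=; apply: eq_bigr => Q _.
rewrite (bigD1 (PQ P Q)) //= ?mulH_PQ // [X in _ + X]big1 ?addr0 ?mulr1 //.
move=> R nR; case cc: (mulH_coef P Q R); last by rewrite mulr0 mul0r.
by move: nR; rewrite (mulH_uniq cc (mulH_PQ P Q)) eqxx.
Qed.

Lemma phi_mul (x : HW K n) (y : HW K m) : phiK (mulH x y) = mulW (phiK x) (phiK y).
Proof.
apply/ffunP => w; rewrite [RHS]ffunE.
have [u0 eu] := exists_pw (size_take_w w).
have [v0 ev] := exists_pw (size_drop_w w).
rewrite (shuf_sum (fun u v => phiK x u * phiK y v) eu ev) !ffunE.
rewrite big_distrl big_distrl /=.
under eq_bigr => P _ do rewrite mulr_sumr big_distrl /=.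
rewrite mulH_expand; apply: eq_bigr => P _; apply: eq_bigr => Q _.
rewrite (lin_PQ P Q eu ev) !natb_and.
by rewrite -!mulrA; congr (_ * _); rewrite !mulrA [_ * y Q]mulrC -!mulrA.
Qed.
End Mul.

Lemma relN_val k (r : 'I_k -> 'I_k -> bool) (X Y : 'I_k) a b :
  a = val X -> b = val Y -> relN r a b = r X Y.
Proof. by move=> -> ->; apply: relN_ord. Qed.

Section Pos.
Variable n : nat.
Implicit Types T : {set 'I_n}.

Definition posn T (p : nat) := nth 0 (posl T) p.

Lemma posl_filter T : posl T = map val [seq x <- enum 'I_n | x \in T].
Proof. by []. Qed.

Lemma filter_enum_set T : [seq x <- enum 'I_n | x \in T] = enum T.
Proof.
by rewrite /enum_mem -filter_predI; apply: eq_filter => x; rewrite /= /in_mem /= andbT.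
Qed.

Lemma size_posl T : size (posl T) = #|T|.
Proof. by rewrite posl_filter size_map filter_enum_set cardE. Qed.

Lemma mem_posl T (x : 'I_n) : (val x \in posl T) = (x \in T).
Proof. by rewrite posl_filter (mem_map val_inj) filter_enum_set mem_enum. Qed.

Lemma posl_lt T y : y \in posl T -> y < n.
Proof. by rewrite posl_filter => /mapP[x _ ->]; apply: ltn_ord. Qed.

Lemma sorted_posl T : sorted ltn (posl T).
Proof.
apply: (subseq_sorted ltn_trans (s2 := iota 0 n)); last exact: iota_ltn_sorted.
by rewrite -val_enum_ord posl_filter map_subseq // filter_subseq.
Qed.

Lemma uniq_posl T : uniq (posl T).
Proof. by apply: (sorted_uniq ltn_trans) => //; [exact: ltnn | exact: sorted_posl]. Qed.

Lemma posn_lt T p : p < #|T| -> posn T p < n.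
Proof. by move=> h; apply: (posl_lt (T := T)); rewrite /posn mem_nth // size_posl. Qed.

Lemma posn_in T p (X : 'I_n) : p < #|T| -> posn T p = val X -> X \in T.
Proof. by move=> h e; rewrite -mem_posl -e /posn mem_nth // size_posl. Qed.

Lemma posn_surj T (X : 'I_n) : X \in T -> exists2 p, p < #|T| & posn T p = val X.
Proof.
rewrite -mem_posl => h; exists (index (val X) (posl T)); last exact: nth_index.
by rewrite -size_posl index_mem.
Qed.

Lemma posn_index T (X : 'I_n) : X \in T -> posn T (index (val X) (posl T)) = val X.
Proof. by rewrite -mem_posl => h; apply: nth_index. Qed.

Lemma index_posn T p : p < #|T| -> index (posn T p) (posl T) = p.
Proof. by move=> h; rewrite /posn index_uniq ?size_posl ?uniq_posl. Qed.

Lemma posn_mono T p q : p < #|T| -> q < #|T| -> (posn T p <= posn T q) = (p <= q).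
Proof.
move=> hp hq; have st := sorted_ltn_nth ltn_trans 0 (sorted_posl T).
have hp' : p \in [pred k | k < size (posl T)] by rewrite inE size_posl.
have hq' : q \in [pred k | k < size (posl T)] by rewrite inE size_posl.
case: (ltngtP p q) => h.
- by apply: ltnW; apply: st.
- by apply/negbTE; rewrite -ltnNge; apply: st.
- by rewrite h leqnn.
Qed.

Lemma posn_inj T p q : p < #|T| -> q < #|T| -> posn T p = posn T q -> p = q.
Proof.
move=> hp hq e; apply/eqP; rewrite eqn_leq -(posn_mono hp hq) -(posn_mono hq hp).
by rewrite e leqnn.
Qed.

End Pos.

Section Restr.
Variable n : nat.
Variable P : wpp n.

Definition rmatch (T : {set 'I_n}) l (A : wpp l) :=
  restr_match (le1 P) T (le1 A) && restr_match (le2 P) T (le2 A).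

Lemma posn_ltl (T : {set 'I_n}) l (h : #|T| = l) (p : 'I_l) : posn T p < n.
Proof. by apply: posn_lt; rewrite h. Qed.

Definition posO (T : {set 'I_n}) l (h : #|T| = l) (p : 'I_l) : 'I_n := Ordinal (posn_ltl h p).

Lemma relN_posO (T : {set 'I_n}) l (h : #|T| = l) (r : 'I_n -> 'I_n -> bool) (p q : 'I_l) :
  relN r (posn T p) (posn T q) = r (posO h p) (posO h q).
Proof. exact: (relN_ord r (posO h p) (posO h q)). Qed.

Lemma relN_tpre (T : {set 'I_n}) l (h : #|T| = l) :
  tpre (fun p q : 'I_l => relN (preceq P) (posn T p) (posn T q)).
Proof.
split.
- by move=> p; rewrite (relN_posO h) preceq_refl.
- by move=> p q r; rewrite !(relN_posO h); apply: preceq_trans.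
- by move=> p q; rewrite !(relN_posO h) preceq_total.
Qed.

Lemma rmatch_mk (T : {set 'I_n}) l (h : #|T| = l) : rmatch T (mkwpp (relN_tpre h)).
Proof.
apply/andP; split; apply/andP; split; rewrite ?h //;
  apply/forallP => p; apply/forallP => q; rewrite ?le1_mk ?le2_mk;
  rewrite !(relN_posO h) ?le1E ?le2E /= posn_mono ?h //.
Qed.

Lemma rmatch_exists (T : {set 'I_n}) l : #|T| = l -> exists A : wpp l, rmatch T A.
Proof. by move=> h; exists (mkwpp (relN_tpre h)); apply: rmatch_mk. Qed.

Lemma rmatch_uniq (T : {set 'I_n}) l (A A' : wpp l) : rmatch T A -> rmatch T A' -> A = A'.
Proof.
case/andP => /andP[_ /forallP h1] /andP[_ /forallP h2].
case/andP => /andP[_ /forallP h1'] /andP[_ /forallP h2'].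
apply: wpp_eq => x y; rewrite /preceq.
move/forallP: (h1 x) => /(_ y) /eqP ->; move/forallP: (h2 x) => /(_ y) /eqP ->.
by move/forallP: (h1' x) => /(_ y) /eqP ->; move/forallP: (h2' x) => /(_ y) /eqP ->.
Qed.

Lemma rmatch_card (T : {set 'I_n}) l (A : wpp l) : rmatch T A -> #|T| = l.
Proof. by case/andP => /andP[/eqP]. Qed.

Lemma rmatch_preceq (T : {set 'I_n}) l (A : wpp l) (p q : 'I_l) :
  rmatch T A -> preceq A p q = relN (preceq P) (posn T p) (posn T q).
Proof.
move=> rm; have h := rmatch_card rm.
by rewrite (rmatch_uniq rm (rmatch_mk h)) preceq_mk.
Qed.

Lemma rmatch_le1 (T : {set 'I_n}) l (A : wpp l) (p q : 'I_l) :
  rmatch T A -> le1 A p q = relN (le1 P) (posn T p) (posn T q).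
Proof. by case/andP => /andP[_ /forallP h1] _; move/forallP: (h1 p) => /(_ q) /eqP. Qed.

Definition linS (T : {set 'I_n}) l (c : pw l) :=
  [forall p : 'I_l, forall q : 'I_l,
    (relN (le1 P) (posn T p) (posn T q) ==> (wval c p <= wval c q)) &&
    ((wval c p == wval c q) ==> relN (preceq P) (posn T p) (posn T q)
                                && relN (preceq P) (posn T q) (posn T p))].

Lemma rmatch_lin (T : {set 'I_n}) l (A : wpp l) (c : pw l) : rmatch T A -> linext A c = linS T c.
Proof.
move=> rm; apply/linextP/forallP => [[h1 h2] p|h].
  apply/forallP => q; apply/andP; split; apply/implyP.
    by rewrite -(rmatch_le1 _ _ rm); apply: h1.
  by move/eqP/h2; rewrite /equivP !(rmatch_preceq _ _ rm).
split => p q.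
  by rewrite (rmatch_le1 _ _ rm); move/forallP: (h p) => /(_ q) /andP[/implyP].
by move=> e; rewrite /equivP !(rmatch_preceq _ _ rm); move/forallP: (h p) => /(_ q)
   /andP[_ /implyP]; apply; apply/eqP.
Qed.

Lemma sum_rmatch (T : {set 'I_n}) l (c : pw l) :
  \sum_(A : wpp l) rmatch T A * linext A c = (#|T| == l) * linS T c.
Proof.
case: (eqVneq #|T| l) => h.
  have [A rm] := rmatch_exists h.
  rewrite (bigD1 A) //= big1 ?addn0 ?rm ?mul1n ?(rmatch_lin c rm) //.
  move=> B nB; case rB: (rmatch T B) => //.
  by move: nB; rewrite (rmatch_uniq rB rm) eqxx.
rewrite big1 // => B _; case rB: (rmatch T B) => //.
by move: h; rewrite (rmatch_card rB) eqxx.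
Qed.

End Restr.

Lemma card_set_sum (T : finType) (p : pred T) : #|[set x | p x]| = \sum_x p x.
Proof. by rewrite -sum1dep_card big_mkcond; apply: eq_bigr => x _; case: (p x). Qed.

Section N1.
Variable n : nat.
Variable P : wpp n.
Variables i j : nat.
Variables (a : pw i) (b : pw j).

Definition validO (O : {set 'I_n}) :=
  [&& upclosed1 P O, #|~: O| == i, linS P (~: O) a, #|O| == j & linS P O b].

Lemma coef_sum (A : wpp i) (B : wpp j) :
  comulH_coef P A B = \sum_O upclosed1 P O * (rmatch P (~: O) A * rmatch P O B).
Proof.
rewrite /comulH_coef card_set_sum; apply: eq_bigr => O _.
by rewrite /rmatch; case: (upclosed1 P O); case: (restr_match _ _ _); case: (restr_match _ _ _);
   case: (restr_match _ _ _); case: (restr_match _ _ _).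
Qed.

Lemma N1 : \sum_(AB : wpp i * wpp j) comulH_coef P AB.1 AB.2 * (linext AB.1 a * linext AB.2 b)
  = #|[set O | validO O]|.
Proof.
rewrite -(pair_bigA _ (fun A B => comulH_coef P A B * (linext A a * linext B b))) /=.
under eq_bigr => A _ do under eq_bigr => B _ do rewrite coef_sum big_distrl /=.
under eq_bigr => A _ do rewrite exchange_big /=.
rewrite exchange_big card_set_sum; apply: eq_bigr => O _.
transitivity (upclosed1 P O * ((\sum_A rmatch P (~: O) A * linext A a) *
                               (\sum_B rmatch P O B * linext B b))).
  rewrite [in RHS]big_distrl [in RHS]big_distrr /=; apply: eq_bigr => A _.
  rewrite [in RHS]big_distrr [in RHS]big_distrr /=; apply: eq_bigr => B _.
  by rewrite -!mulnA; congr (_ * (_ * _)); apply: mulnCA.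
rewrite !sum_rmatch /validO.
by case: (upclosed1 P O); case: (#|~: O| == i); case: (linS _ _ _); case: (#|O| == j);
   case: (linS _ _ _).
Qed.
End N1.

Lemma count_sum T (p : pred T) s : count p s = \sum_(x <- s) p x.
Proof. by elim: s => [|x s IH]; rewrite ?big_nil ?big_cons //= IH. Qed.

Lemma count_iota_ord (p : pred nat) N L : N <= L ->
  count p (iota 0 N) = \sum_(k < L) ((k < N) && p k).
Proof.
move=> le; have -> : iota 0 N = index_iota 0 N by rewrite /index_iota subn0.
rewrite count_sum big_mkord.
rewrite (big_ord_widen _ (fun k => nat_of_bool (p k)) le) big_mkcond /=.
by apply: eq_bigr => k _; case: (k < N).
Qed.

Section PWfacts.
Variable n : nat.
Implicit Type w : pw n.

Lemma pw_mem w x : wval w x \in wseq w.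
Proof. by rewrite -nth_wseq mem_nth // size_wseq. Qed.

Lemma pw_pos w x : 0 < wval w x.
Proof. by case/andP: (packed_wseq w) => /allP h _; apply: h; apply: pw_mem. Qed.

Lemma pw_le_max w x : wval w x <= maxw (wseq w).
Proof. exact/maxw_ge/pw_mem. Qed.

Lemma maxw_le_n w : maxw (wseq w) <= n.
Proof.
apply: maxw_le; apply/allP => y /(nthP 0)[p]; rewrite size_wseq => hp <-.
by rewrite (nth_wseq w (Ordinal hp)) -ltnS ltn_ord.
Qed.

Lemma pw_attained w v : 0 < v -> v <= maxw (wseq w) -> exists x, wval w x = v.
Proof.
move=> v0 vm; case/andP: (packed_wseq w) => _ /allP h.
have : v \in wseq w by apply: h; rewrite mem_iota v0 add1n ltnS.
case/(nthP 0) => p; rewrite size_wseq => hp <-.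
by exists (Ordinal hp); rewrite -nth_wseq.
Qed.

Lemma filter_wseq w (q : pred nat) :
  [seq y <- wseq w | q y] = [seq nth 0 (wseq w) p | p <- posl [set x | q (wval w x)]].
Proof.
rewrite posl_filter -map_comp filter_map /=.
have -> : [seq x <- enum 'I_n | x \in [set x0 | q (wval w x0)]] =
          [seq i <- enum 'I_n | preim (wval w) q i].
  by apply: eq_filter => x; rewrite inE.
by apply: eq_map => x /=; rewrite nth_wseq.
Qed.
End PWfacts.

Lemma pack_pw l (t : seq nat) (c : pw l) : size t = l ->
  (pack t == wseq c) =
  [forall p : 'I_l, forall q : 'I_l, (wval c p <= wval c q) == (nth 0 t p <= nth 0 t q)].
Proof.
move=> st; apply/eqP/forallP => [e p|h].
  by apply/forallP => q; rewrite -!nth_wseq -e pack_le ?st.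
rewrite -(pack_wseq c); apply: pack_ord; first by rewrite size_wseq.
move=> x y; rewrite st => hx hy.
move/forallP: (h (Ordinal hx)) => /(_ (Ordinal hy)) /eqP.
by rewrite -!nth_wseq /= => ->.
Qed.

Section N2.
Variable n : nat.
Variable P : wpp n.
Variables i j : nat.
Variables (a : pw i) (b : pw j).

Lemma pack_filter_pw (w : pw n) (q : pred nat) l (c : pw l) :
  (pack [seq y <- wseq w | q y] == wseq c) =
  (#|[set x | q (wval w x)]| == l) &&
  [forall p : 'I_l, forall r : 'I_l, (wval c p <= wval c r) ==
     (nth 0 (wseq w) (posn [set x | q (wval w x)] p) <=
      nth 0 (wseq w) (posn [set x | q (wval w x)] r))].
Proof.
rewrite filter_wseq; set T := [set x | q (wval w x)].
case: (eqVneq #|T| l) => h /=.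
  rewrite pack_pw; last by rewrite size_map size_posl.
  apply: eq_forallb => p; apply: eq_forallb => r.
  have hp : p < size (posl T) by rewrite size_posl h.
  have hr : r < size (posl T) by rewrite size_posl h.
  by rewrite (nth_map 0 _ _ hp) (nth_map 0 _ _ hr).
apply: negbTE; apply: contra h => /eqP e.
by have := congr1 size e; rewrite size_pack size_map size_posl size_wseq => ->.
Qed.

Lemma lin_to_linS (T : {set 'I_n}) l (h : #|T| = l) (c : pw l) (w : pw n) :
  linext P w ->
  (forall p r : 'I_l, (wval c p <= wval c r) =
     (nth 0 (wseq w) (posn T p) <= nth 0 (wseq w) (posn T r))) ->
  linS P T c.
Proof.
case/linextP => h1 h2 ord; apply/forallP => p; apply/forallP => r.
have np (x : 'I_l) : nth 0 (wseq w) (posn T x) = wval w (posO h x) by rewrite -nth_wseq.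
rewrite !(relN_posO h); apply/andP; split; apply/implyP.
  by move/h1; rewrite ord !np.
by rewrite eqn_leq !ord !np -eqn_leq => /eqP /h2 /andP[-> ->].
Qed.

Definition Cwk (w : pw n) (k : nat) :=
  [&& linext P w, k <= maxw (wseq w),
      pack [seq x <- wseq w | x <= k] == wseq a & pack [seq x <- wseq w | k < x] == wseq b].

Lemma setC_gt (w : pw n) k : ~: [set x | k < wval w x] = [set x | wval w x <= k].
Proof. by apply/setP => x; rewrite !inE -leqNgt. Qed.

Lemma C_valid (w : pw n) k : Cwk w k -> validO P a b [set x | k < wval w x].
Proof.
case/and4P => lin km pa pb; rewrite /validO setC_gt.
rewrite pack_filter_pw in pa; rewrite pack_filter_pw in pb.
case/andP: pa => /eqP ha /forallP oa; case/andP: pb => /eqP hb /forallP ob.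
rewrite ha hb !eqxx /=; apply/and3P; split.
- apply/forallP => x; apply/forallP => y; apply/implyP; rewrite !inE => /andP[kx le].
  by case/linextP: lin => h1 _; apply: leq_trans kx (h1 _ _ le).
- apply: (lin_to_linS ha) lin _ => p r.
  by move/forallP: (oa p) => /(_ r) /eqP.
- apply: (lin_to_linS hb) lin _ => p r.
  by move/forallP: (ob p) => /(_ r) /eqP.
Qed.


Lemma idx_lt (T : {set 'I_n}) l (h : #|T| = l) (x : 'I_n) : x \in T -> index (val x) (posl T) < l.
Proof. by rewrite -mem_posl -index_mem size_posl h. Qed.

Lemma linS_at (T : {set 'I_n}) l (c : pw l) (h : #|T| = l) (x y : 'I_n) :
  linS P T c -> x \in T -> y \in T ->
  (le1 P x y -> nth 0 (wseq c) (index (val x) (posl T)) <= nth 0 (wseq c) (index (val y) (posl T))) /\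
  (nth 0 (wseq c) (index (val x) (posl T)) = nth 0 (wseq c) (index (val y) (posl T)) -> equivP P x y).
Proof.
move=> /forallP L xT yT.
pose p := Ordinal (idx_lt h xT); pose r := Ordinal (idx_lt h yT).
move/forallP: (L p) => /(_ r) /andP[/implyP L1 /implyP L2].
have ex : posn T p = val x by rewrite /= posn_index.
have ey : posn T r = val y by rewrite /= posn_index.
rewrite (relN_val _ ex ey) in L1.
rewrite (relN_val _ ex ey) (relN_val _ ey ex) in L2.
have -> : nth 0 (wseq c) (index (val x) (posl T)) = wval c p by rewrite -nth_wseq.
have -> : nth 0 (wseq c) (index (val y) (posl T)) = wval c r by rewrite -nth_wseq.
split => [/L1 //|e]; rewrite /equivP; apply: L2; by rewrite e.
Qed.

Lemma Cwk_ord (w : pw n) (q : pred nat) l (c : pw l) (x y : 'I_n) :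
  pack [seq z <- wseq w | q z] == wseq c -> q (wval w x) -> q (wval w y) ->
  (wval w x <= wval w y) =
  (nth 0 (wseq c) (index (val x) (posl [set z | q (wval w z)])) <=
   nth 0 (wseq c) (index (val y) (posl [set z | q (wval w z)]))).
Proof.
rewrite pack_filter_pw => /andP[/eqP h /forallP o] qx qy.
set T := [set z | q (wval w z)].
have xT : x \in T by rewrite inE.
have yT : y \in T by rewrite inE.
pose p := Ordinal (idx_lt h xT); pose r := Ordinal (idx_lt h yT).
move/forallP: (o p) => /(_ r) /eqP.
rewrite !posn_index // !nth_wseq -!(nth_wseq c) /= => ->.
by [].
Qed.


Lemma Cwk_inj (w w' : pw n) k k' : Cwk w k -> Cwk w' k' ->
  [set x | k < wval w x] = [set x | k' < wval w' x] -> w = w' /\ k = k'.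
Proof.
move=> C C' eO.
have inO x : (k < wval w x) = (k' < wval w' x).
  by move/setP: eO => /(_ x); rewrite !inE.
have ew : w = w'.
  case/and4P: C => _ _ pa pb; case/and4P: C' => _ _ pa' pb'.
  have eS : [set z | wval w z <= k] = [set z | wval w' z <= k'] by rewrite -!setC_gt eO.
  apply: pw_ord_inj => x y.
  case: (leqP (wval w x) k) => hx; case: (leqP (wval w y) k) => hy.
  - have hx' : wval w' x <= k' by rewrite leqNgt -inO -leqNgt.
    have hy' : wval w' y <= k' by rewrite leqNgt -inO -leqNgt.
    by rewrite (Cwk_ord pa hx hy) (Cwk_ord pa' hx' hy') eS.
  - have hx' : wval w' x <= k' by rewrite leqNgt -inO -leqNgt.
    have hy' : k' < wval w' y by rewrite -inO.
    by rewrite (leq_trans hx (ltnW hy)) (leq_trans hx' (ltnW hy')).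
  - have hx' : k' < wval w' x by rewrite -inO.
    have hy' : wval w' y <= k' by rewrite leqNgt -inO -leqNgt.
    apply/esym; rewrite leqNgt (leq_ltn_trans hy' hx') leqNgt.
    by rewrite (leq_ltn_trans hy hx).
  - have hx' : k' < wval w' x by rewrite -inO.
    have hy' : k' < wval w' y by rewrite -inO.
    by rewrite (Cwk_ord pb hx hy) (Cwk_ord pb' hx' hy') eO.
split => //; subst w'.
case: (ltngtP k k') => // hk; exfalso.
- case/and4P: C' => _ km _ _.
  have [x ex] := pw_attained (leq_ltn_trans (leq0n k) hk) km.
  by have := inO x; rewrite ex hk ltnn.
- case/and4P: C => _ km _ _.
  have [x ex] := pw_attained (leq_ltn_trans (leq0n k') hk) km.
  by have := inO x; rewrite ex hk ltnn.
Qed.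

End N2.

Section Surj.
Variable n : nat.
Variable P : wpp n.
Variables i j : nat.
Variables (a : pw i) (b : pw j).
Variable O : {set 'I_n}.
Hypothesis V : validO P a b O.

Let S := ~: O.
Let Ka := maxw (wseq a).
Let sa (x : 'I_n) := nth 0 (wseq a) (index (val x) (posl S)).
Let sb (x : 'I_n) := nth 0 (wseq b) (index (val x) (posl O)).
Let sv (x : 'I_n) := if x \in O then Ka + sb x else sa x.
Let s := [seq sv x | x <- enum 'I_n].

Let hS : #|S| = i. Proof. by case/and5P: V => _ /eqP. Qed.
Let hO : #|O| = j. Proof. by case/and5P: V => _ _ _ /eqP. Qed.

Lemma size_s : size s = n.
Proof. by rewrite size_map size_enum_ord. Qed.

Definition w0 : pw n := sval (exists_pw size_s).

Lemma ordw0 x y : (wval w0 x <= wval w0 y) = (sv x <= sv y).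
Proof.
rewrite -!nth_wseq /w0; case: exists_pw => u /= ->.
rewrite pack_le ?size_s //.
by rewrite /s !(nth_map x) -?enumT ?size_enum_ord // !nth_ord_enum.
Qed.

Lemma sv_S x : x \notin O -> sv x <= Ka.
Proof.
move=> xO; rewrite /sv (negbTE xO) /sa; apply: maxw_ge; apply: mem_nth.
by rewrite size_wseq; apply: (idx_lt hS); rewrite /S inE.
Qed.

Lemma sv_O x : x \in O -> Ka < sv x.
Proof.
move=> xO; rewrite /sv xO -addn1 leq_add2l /sb.
case/andP: (packed_wseq b) => /allP pos _; apply: pos; apply: mem_nth.
by rewrite size_wseq; apply: (idx_lt hO).
Qed.

Definition k0 := \max_(x | x \notin O) wval w0 x.

Lemma setO : [set x | k0 < wval w0 x] = O.
Proof.
apply/setP => x; rewrite inE; case xO: (x \in O).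
  have wpos := pw_pos w0 x.
  rewrite -(prednK wpos) ltnS; apply/bigmax_leqP => y yO.
  rewrite -ltnS (prednK wpos) ltnNge ordw0 -ltnNge.
  by apply: leq_ltn_trans (sv_S yO) (sv_O xO).
by apply/negbTE; rewrite -leqNgt; apply: (leq_bigmax_cond (F := wval w0)); rewrite xO.
Qed.

Lemma k0_le : k0 <= maxw (wseq w0).
Proof. by apply/bigmax_leqP => y _; apply: pw_le_max. Qed.

Lemma packa : pack [seq z <- wseq w0 | z <= k0] == wseq a.
Proof.
rewrite pack_filter_pw.
have eS : [set x | wval w0 x <= k0] = S by rewrite -setC_gt setO.
rewrite eS hS eqxx /=; apply/forallP => p; apply/forallP => r; apply/eqP.
have hp : p < #|S| by rewrite hS.
have hr : r < #|S| by rewrite hS.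
pose X := Ordinal (posn_lt hp); pose Y := Ordinal (posn_lt hr).
have XS : X \in S by apply: (posn_in hp).
have YS : Y \in S by apply: (posn_in hr).
rewrite (nth_wseq w0 X) (nth_wseq w0 Y) ordw0.
have XO : X \notin O by move: XS; rewrite /S inE.
have YO : Y \notin O by move: YS; rewrite /S inE.
rewrite /sv (negbTE XO) (negbTE YO) /sa /= !index_posn //.
by rewrite -!nth_wseq.
Qed.

Lemma packb : pack [seq z <- wseq w0 | k0 < z] == wseq b.
Proof.
rewrite pack_filter_pw setO hO eqxx /=; apply/forallP => p; apply/forallP => r; apply/eqP.
have hp : p < #|O| by rewrite hO.
have hr : r < #|O| by rewrite hO.
pose X := Ordinal (posn_lt hp); pose Y := Ordinal (posn_lt hr).
have XO : X \in O by apply: (posn_in hp).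
have YO : Y \in O by apply: (posn_in hr).
rewrite (nth_wseq w0 X) (nth_wseq w0 Y) ordw0.
rewrite /sv XO YO leq_add2l /sb /= !index_posn //.
by rewrite -!nth_wseq.
Qed.

Lemma lin_w0 : linext P w0.
Proof.
case/and5P: V => /forallP up _ La _ Lb.
have upc x y : x \in O -> le1 P x y -> y \in O.
  by move=> xO le; move/forallP: (up x) => /(_ y) /implyP; apply; rewrite xO le.
apply/linextP; split => x y.
  move=> le; rewrite ordw0; case xO: (x \in O).
    have yO := upc _ _ xO le.
    rewrite /sv xO yO leq_add2l.
    by case: (linS_at hO Lb xO yO) => h _; apply: h.
  case yO: (y \in O).
    by apply: ltnW; apply: leq_ltn_trans (sv_S _) (sv_O yO); rewrite xO.
  have xS : x \in S by rewrite /S inE xO.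
  have yS : y \in S by rewrite /S inE yO.
  by rewrite /sv xO yO; case: (linS_at hS La xS yS) => h _; apply: h.
move=> e.
have e' : sv x = sv y by apply/eqP; rewrite eqn_leq -!ordw0 e leqnn.
case xO: (x \in O); case yO: (y \in O).
- move: e'; rewrite /sv xO yO => /addnI.
  by case: (linS_at hO Lb xO yO) => _ h; apply: h.
- have h1 := sv_O xO; have h2 : sv y <= Ka by apply: sv_S; rewrite yO.
  by move: h1; rewrite e' ltnNge h2.
- have h1 := sv_O yO; have h2 : sv x <= Ka by apply: sv_S; rewrite xO.
  by move: h1; rewrite -e' ltnNge h2.
- have xS : x \in S by rewrite /S inE xO.
  have yS : y \in S by rewrite /S inE yO.
  move: e'; rewrite /sv xO yO.
  by case: (linS_at hS La xS yS) => _ h; apply: h.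
Qed.

Lemma valid_C : exists w k, Cwk P a b w k /\ [set x | k < wval w x] = O.
Proof.
exists w0, k0; split; last exact: setO.
by rewrite /Cwk lin_w0 k0_le packa packb.
Qed.

End Surj.

Section N2b.
Variable n : nat.
Variable P : wpp n.
Variables i j : nat.
Variables (a : pw i) (b : pw j).

Lemma deconc_sum (w : pw n) :
  linext P w * deconc_coef w a b = \sum_(k < n.+1) Cwk P a b w k.
Proof.
rewrite /deconc_coef (count_iota_ord _ (L := n.+1)); last by rewrite ltnS maxw_le_n.
rewrite big_distrr /=; apply: eq_bigr => k _.
by rewrite /Cwk ltnS; case: (linext P w); case: (k <= _); case: (_ == _); case: (_ == _).
Qed.

Lemma N2 : \sum_(w : pw n) linext P w * deconc_coef w a b = #|[set O | validO P a b O]|.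
Proof.
under eq_bigr => w _ do rewrite deconc_sum.
rewrite pair_bigA /= -card_set_sum.
set Cs := [set p : pw n * 'I_n.+1 | Cwk P a b p.1 p.2].
pose F (p : pw n * 'I_n.+1) := [set x | (p.2 : nat) < wval p.1 x].
have inj : {in Cs &, injective F}.
  move=> [w k] [w' k']; rewrite !inE /= => C C' e.
  have [-> ek] := Cwk_inj C C' e.
  by congr pair; apply: val_inj.
suff -> : [set O | validO P a b O] = F @: Cs by rewrite card_in_imset.
apply/setP => O; rewrite inE; apply/idP/imsetP; last first.
  by case=> [[w k]]; rewrite inE /= => C ->; apply: C_valid.
move=> V; have [w [k [C e]]] := valid_C V.
have kn : k < n.+1.
  by case/and4P: (C) => _ km _ _; rewrite ltnS (leq_trans km) // maxw_le_n.
by exists (w, Ordinal kn); rewrite ?inE //= e.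
Qed.
End N2b.

Import GRing.Theory.
Section Comul.
Variable K : fieldType.
Local Open Scope ring_scope.

Lemma phi_comul n i j (x : HW K n) : phi2 (comulH i j x) = comulW i j (phiK x).
Proof.
apply/ffunP => -[a b]; rewrite !ffunE /=.
transitivity (\sum_(P : wpp n) x P *
   (\sum_(AB : wpp i * wpp j) comulH_coef P AB.1 AB.2 * (linext AB.1 a * linext AB.2 b))%:R).
  under eq_bigr => AB _ do rewrite ffunE big_distrl /=.
  rewrite exchange_big /=; apply: eq_bigr => P _.
  rewrite natr_sum mulr_sumr; apply: eq_bigr => AB _.
  by rewrite -mulrA -natrM.
transitivity (\sum_(P : wpp n) x P *
   (\sum_(w : pw n) linext P w * deconc_coef w a b)%:R).
  by apply: eq_bigr => P _; rewrite N1 N2.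
under [RHS]eq_bigr => w _ do rewrite ffunE big_distrl /=.
rewrite [RHS]exchange_big /=; apply: eq_bigr => P _.
rewrite natr_sum mulr_sumr; apply: eq_bigr => w _.
by rewrite natrM mulrA.
Qed.
End Comul.

Import GRing.Theory.

Lemma wpp0_uniq (P Q : wpp 0) : P = Q.
Proof. by apply: wpp_eq => -[]. Qed.

Lemma pw0_uniq (u v : pw 0) : u = v.
Proof. by apply: pw_ord_inj => -[]. Qed.

Lemma lin0 (P : wpp 0) (w : pw 0) : linext P w.
Proof. by apply/linextP; split => -[]. Qed.

Section Unit.
Variable K : fieldType.
Local Open Scope ring_scope.

Lemma phi_unit : phiK (unitH K) = unitW K.
Proof.
apply/ffunP => w; rewrite !ffunE (bigD1 (gP w)) //= big1 ?addr0.
  by rewrite ffunE lin0 mulr1.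
by move=> P nP; move: nP; rewrite (wpp0_uniq P (gP w)) eqxx.
Qed.

Lemma phi_counit (x : HW K 0) : counitW (phiK x) = counitH x.
Proof.
rewrite /counitW /counitH.
under eq_bigr => w _ do rewrite ffunE.
rewrite exchange_big /=; apply: eq_bigr => P _.
rewrite (bigD1 (wP P)) //= big1 ?addr0 ?lin0 ?mulr1 //.
by move=> w nw; move: nw; rewrite (pw0_uniq w (wP P)) eqxx.
Qed.
End Unit.

Unset Implicit Arguments.
Theorem mainTheorem5 (K : fieldType) :
  [/\ (* phi is bijective (on every homogeneous component) *)
      forall n, bijective (@phiK K n),
      (* phi is multiplicative and unital *)
      forall n m (x : HW K n) (y : HW K m),
        phiK (mulH x y) = mulW (phiK x) (phiK y),
      phiK (unitH K) = unitW K,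
      (* phi is comultiplicative *)
      forall n i j (x : HW K n),
        phi2 (comulH i j x) = comulW i j (phiK x) &
      (* phi is counital *)
      forall x : HW K 0, counitW (phiK x) = counitH x].
Proof.
split.
- by move=> n; apply: phiK_bij.
- by move=> n m x y; apply: phi_mul.
- exact: phi_unit.
- by move=> n i j x; apply: phi_comul.
- exact: phi_counit.
Qed.
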